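(* Let $\mathcal K'$ be a tame shrinking of a tame topological Kuranishi atlas $\mathcal K$, with domains $U'_I\subset U_I$. Then the map $\iota:|\mathcal K'|\to|\mathcal K|$ induced by the inclusions $U'_I\hookrightarrow U_I$ (i.e. $\pi_{\mathcal K'}(I,x)\mapsto\pi_{\mathcal K}(I,x)$) is well defined and injective.
   Context: Notation: for subsets $V'\subset V$ of a topological space, $V'\sqsubset V$ means the closure of $V'$ in $V$ is compact. $X$ is a compact metrizable space. Charts: a topological Kuranishi chart for $X$ with open footprint $F\subset X$ is a tuple $\mathbf K=(U,\mathbb E,\mathfrak s,\psi)$ where $U$ is a separable, locally compact, metrizable space; $\mathbb E$ is a separable, locally compact, metrizable space with continuous maps $\mathrm{pr}:\mathbb E\to U$ and $0:U\to\mathbb E$ with $\mathrm{pr}\circ0=\mathrm{id}_U$; $\mathfrak s:U\to\mathbb E$ is continuous with $\mathrm{pr}\circ\mathfrak s=\mathrm{id}_U$; and $\psi$ is a homeomorphism from $\mathfrak s^{-1}(0):=\{x\in U:\mathfrak s(x)=0(x)\}$ onto $F$. For open $U'\subset U$ the restriction is $\mathbf K|_{U'}:=(U',\mathrm{pr}^{-1}(U'),\mathfrak s|_{U'},\psi|_{U'\cap\mathfrak s^{-1}(0)})$. Coordinate changes: for charts $\mathbf K_I,\mathbf K_J$ with $F_I\cap F_J\neq\emptyset$, a coordinate change $\widehat\Phi_{IJ}:\mathbf K_I\to\mathbf K_J$ consists of an open set $U_{IJ}\subset U_I$ with $U_{IJ}\cap\mathfrak s_I^{-1}(0_I)=\psi_I^{-1}(F_I\cap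 F_J)$ and a topological embedding $\widehat\Phi_{IJ}:\mathrm{pr}_I^{-1}(U_{IJ})\to\mathbb E_J$ such that there is a topological embedding $\phi_{IJ}:U_{IJ}\to U_J$ with $\mathrm{pr}_J\circ\widehat\Phi_{IJ}=\phi_{IJ}\circ\mathrm{pr}_I$, $0_J\circ\phi_{IJ}=\widehat\Phi_{IJ}\circ0_I$ and $\mathfrak s_J\circ\phi_{IJ}=\widehat\Phi_{IJ}\circ\mathfrak s_I$ on $U_{IJ}$, and $\phi_{IJ}=\psi_J^{-1}\circ\psi_I$ on $U_{IJ}\cap\mathfrak s_I^{-1}(0_I)$. Atlases: a covering family of basic charts is a finite family $(\mathbf K_i)_{i=1,\dots,N}$ of charts whose footprints cover $X$; $\mathcal I_{\mathcal K}$ is the set of nonempty $I\subset\{1,\dots,N\}$ with $F_I:=\bigcap_{i\in I}F_i\neq\emptyset$. Transition data consist of a chart $\mathbf K_J$ with footprint $F_J$ for each $J\in\mathcal I_{\mathcal K}$ with $|J|\ge2$ (and $\mathbf K_{\{i\}}:=\mathbf K_i$), and a coordinate change $\widehat\Phi_{IJ}:\mathbf K_I\to\mathbf K_J$ for all $I\subsetneq J$ in $\mathcal I_{\mathcal K}$. We set $U_{II}:=U_I$, $\phi_{II}:=\mathrm{id}_{U_I}$. For $I\subsetneq J\subsetneq K$ let $U_{IJK}:=U_{IJ}\cap\phi_{IJ}^{-1}(U_{JK})$. The triple satisfies the weak cocycle condition if $\widehat\Phi_{JK}\circ\widehat\Phi_{IJ}=\widehat\Phi_{IK}$ on $\mathrm{pr}_I^{-1}(U_{IJK}\cap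 U_{IK})$; the cocycle condition if in addition $U_{IJK}\subset U_{IK}$; the strong cocycle condition if in addition $U_{IJK}=U_{IK}$. A weak topological Kuranishi atlas $\mathcal K$ is a covering family with transition data satisfying the weak cocycle condition for all such triples; a topological Kuranishi atlas is one satisfying the cocycle condition for all triples. Filtrations: a weak topological Kuranishi atlas is filtered if it is equipped with closed subsets $\mathbb E_{IJ}\subset\mathbb E_J$ for all $J\in\mathcal I_{\mathcal K}$ and $I\subset J$ (including $I=\emptyset$) such that (i) $\mathbb E_{JJ}=\mathbb E_J$ and $\mathbb E_{\emptyset J}=\mathrm{im}\,0_J$; (ii) $\widehat\Phi_{JK}(\mathrm{pr}_J^{-1}(U_{JK})\cap\mathbb E_{IJ})=\mathbb E_{IK}\cap\mathrm{pr}_K^{-1}(\mathrm{im}\,\phi_{JK})$ for $I\subset J\subsetneq K$; (iii) $\mathbb E_{IJ}\cap\mathbb E_{HJ}=\mathbb E_{(I\cap H)J}$ for $I,H\subset J$; (iv) $\mathrm{im}\,\phi_{IJ}$ is an open subset of $\mathfrak s_J^{-1}(\mathbb E_{IJ})$ for $I\subsetneq J$. Tameness: a filtered weak topological Kuranishi atlas is tame if $U_{IJ}\cap U_{IK}=U_{I(J\cup K)}$ for all $I,J,K\in\mathcal I_{\mathcal K}$ with $I\subset J,K$ (where $U_{IL}:=\emptyset$ if $L\notin\mathcal I_{\mathcal K}$), and $\phi_{IJ}(U_{IK})=U_{JK}\cap\mathfrak s_J^{-1}(\mathbb E_{IJ})$ for all $I\subset J\subset K$ in $\mathcal I_{\mathcal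 K}$ (equalities of indices allowed). Virtual neighbourhood: for a topological Kuranishi atlas, $|\mathcal K|$ is the quotient of $\bigsqcup_{I\in\mathcal I_{\mathcal K}}U_I=\{(I,x):x\in U_I\}$ by the equivalence relation generated by $(I,x)\sim(J,\phi_{IJ}(x))$ for $I\subset J$, $x\in U_{IJ}$, with the quotient topology and projection $\pi_{\mathcal K}$. Shrinkings: a shrinking of a finite open cover $(F_i)_{i=1}^N$ of $X$ is a cover $(F'_i)_{i=1}^N$ of $X$ by open sets $F'_i\sqsubset F_i$ such that $F_I\neq\emptyset\Rightarrow F'_I:=\bigcap_{i\in I}F'_i\neq\emptyset$ for all $I$. A shrinking of a weak topological Kuranishi atlas $\mathcal K$ is a weak topological Kuranishi atlas $\mathcal K'$ with the same index set such that its footprint cover $(F'_i)$ is a shrinking of $(F_i)$, each chart is a restriction $\mathbf K'_I=\mathbf K_I|_{U'_I}$ to a precompact open $U'_I\sqsubset U_I$ with footprint $F'_I$, and each coordinate change $\widehat\Phi'_{IJ}$ is the restriction of $\widehat\Phi_{IJ}$ to the domain $U'_{IJ}:=U'_I\cap\phi_{IJ}^{-1}(U'_J)$. A tame shrinking is a shrinking which, with the filtration $\mathbb E'_{IJ}:=\mathbb E_{IJ}\cap\mathrm{pr}_J^{-1}(U'_J)$, is a tame topological Kuranishi atlas. *)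

(* Defs.v *)
From Stdlib Require Import Reals Relations List.
From mathcomp Require Import all_boot.
Set Implicit Arguments.
Unset Strict Implicit.
Unset Printing Implicit Defensive.

Record TopSpace := {
  tcar :> Type;
  topen : (tcar -> Prop) -> Prop;
  topen_full : topen (fun _ => True);
  topen_inter : forall A B, topen A -> topen B -> topen (fun x => A x /\ B x);
  topen_union : forall (i : Type) (A : i -> tcar -> Prop),
      (forall k, topen (A k)) -> topen (fun x => exists k, A k x)
}.

Definition incl_p {T : Type} (A B : T -> Prop) := forall x, A x -> B x.
Definition img {A B : Type} (f : A -> B) (P : A -> Prop) : B -> Prop :=
  fun y => exists x, P x /\ f x = y.

Definition rel_open (T : TopSpace) (A B : T -> Prop) :=
  incl_p B A /\ exists O, @topen T O /\ forall x, B x <-> (A x /\ O x).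
Definition rel_closed (T : TopSpace) (A B : T -> Prop) :=
  incl_p B A /\ exists C, @topen T (fun x => ~ C x) /\ forall x, B x <-> (A x /\ C x).

Definition cont_on (T T' : TopSpace) (A : T -> Prop) (f : T -> T') :=
  forall O, @topen T' O -> rel_open A (fun x => A x /\ O (f x)).

Definition homeo_onto (T T' : TopSpace) (A : T -> Prop) (B : T' -> Prop) (f : T -> T') :=
  (forall x, A x -> B (f x)) /\
  (forall y, B y -> exists x, A x /\ f x = y) /\
  (forall x y, A x -> A y -> f x = f y -> x = y) /\
  cont_on A f /\
  (forall V, rel_open A V -> rel_open B (img f V)).

Definition embedding (T T' : TopSpace) (A : T -> Prop) (f : T -> T') :=
  homeo_onto A (img f A) f.

Definition compact_set (T : TopSpace) (A : T -> Prop) :=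
  forall (i : Type) (O : i -> T -> Prop), (forall k, @topen T (O k)) ->
    (forall x, A x -> exists k, O k x) ->
    exists l : list i, forall x, A x -> exists k, List.In k l /\ O k x.

Definition cl_in (T : TopSpace) (A B : T -> Prop) : T -> Prop :=
  fun x => A x /\ forall O, @topen T O -> O x -> exists y, B y /\ O y.

Definition precompact_in (T : TopSpace) (B A : T -> Prop) :=
  incl_p B A /\ compact_set (cl_in A B).

Definition metrizable_set (T : TopSpace) (A : T -> Prop) :=
  exists d : T -> T -> R,
    (forall x y, A x -> A y -> Rle R0 (d x y)) /\
    (forall x y, A x -> A y -> (d x y = R0 <-> x = y)) /\
    (forall x y, A x -> A y -> d x y = d y x) /\
    (forall x y z, A x -> A y -> A z -> Rle (d x z) (Rplus (d x y) (d y z))) /\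
    (forall B, incl_p B A ->
       (rel_open A B <-> forall x, B x -> exists eps, Rlt R0 eps /\
          forall y, A y -> Rlt (d x y) eps -> B y)).

Definition separable_set (T : TopSpace) (A : T -> Prop) :=
  exists D : T -> Prop, incl_p D A /\
    (exists g : nat -> T, forall x, D x -> exists n, g n = x) /\
    (forall O, @topen T O -> (exists x, A x /\ O x) -> exists x, D x /\ O x).

Definition loc_compact_set (T : TopSpace) (A : T -> Prop) :=
  forall x, A x -> exists Nb : T -> Prop, incl_p Nb A /\ compact_set Nb /\
    exists O, @topen T O /\ O x /\ forall y, A y -> O y -> Nb y.

(* A topological Kuranishi chart whose domain is the (sub)space D of the
   ambient space U; the bundle is E_D = pr^{-1}(D).  For a chart in the
   paper's sense D is everything; restrictions K|_{U'} have D = U'. *)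
Definition is_chart (X U E : TopSpace) (D : U -> Prop) (pr : E -> U)
    (zr s : U -> E) (psi : U -> X) (Fp : X -> Prop) :=
  @topen X Fp /\
  separable_set D /\ loc_compact_set D /\ metrizable_set D /\
  separable_set (fun e => D (pr e)) /\ loc_compact_set (fun e => D (pr e)) /\
  metrizable_set (fun e => D (pr e)) /\
  cont_on (fun e => D (pr e)) pr /\
  cont_on D zr /\ (forall x, D x -> pr (zr x) = x) /\
  cont_on D s /\ (forall x, D x -> pr (s x) = x) /\
  homeo_onto (fun x => D x /\ s x = zr x) Fp psi.

Definition coord_change (X UI UJ EI EJ : TopSpace) (DI : UI -> Prop) (DJ : UJ -> Prop)
    (prI : EI -> UI) (zrI sI : UI -> EI) (psiI : UI -> X)
    (prJ : EJ -> UJ) (zrJ sJ : UJ -> EJ) (psiJ : UJ -> X)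
    (FI FJ : X -> Prop) (UIJ : UI -> Prop) (Phi : EI -> EJ) (phi : UI -> UJ) :=
  rel_open DI UIJ /\
  (forall x, (UIJ x /\ sI x = zrI x) <->
             (DI x /\ sI x = zrI x /\ FI (psiI x) /\ FJ (psiI x))) /\
  (forall e, UIJ (prI e) -> DJ (prJ (Phi e))) /\
  embedding (fun e => UIJ (prI e)) Phi /\
  (forall x, UIJ x -> DJ (phi x)) /\
  embedding UIJ phi /\
  (forall e, UIJ (prI e) -> prJ (Phi e) = phi (prI e)) /\
  (forall x, UIJ x -> zrJ (phi x) = Phi (zrI x)) /\
  (forall x, UIJ x -> sJ (phi x) = Phi (sI x)) /\
  (forall x, UIJ x -> sI x = zrI x -> sJ (phi x) = zrJ (phi x) /\ psiJ (phi x) = psiI x).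

(* Data of a (weak) atlas indexed by subsets I of {1..N} (here 'I_N);
   basic chart K_i is the chart with index [set i].
   aUIJ I J = U_IJ, aPhi I J = Phi_IJ, aphi I J = phi_IJ, aEE I J = E_IJ ⊂ E_J. *)
Record AtlasData (N : nat) (X : TopSpace) := {
  aU : {set 'I_N} -> TopSpace;
  aE : {set 'I_N} -> TopSpace;
  apr : forall I, aE I -> aU I;
  azr : forall I, aU I -> aE I;
  asec : forall I, aU I -> aE I;
  apsi : forall I, aU I -> X;
  aUIJ : forall I J : {set 'I_N}, aU I -> Prop;
  aPhi : forall I J : {set 'I_N}, aE I -> aE J;
  aphi : forall I J : {set 'I_N}, aU I -> aU J;
  aEE : forall I J : {set 'I_N}, aE J -> Prop
}.
Arguments aU {N X} _ _.
Arguments aE {N X} _ _.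
Arguments apr {N X} _ _ _.
Arguments azr {N X} _ _ _.
Arguments asec {N X} _ _ _.
Arguments apsi {N X} _ _ _.
Arguments aUIJ {N X} _ _ _ _.
Arguments aPhi {N X} _ _ _ _.
Arguments aphi {N X} _ _ _ _.
Arguments aEE {N X} _ _ _ _.

Section AtlasDefs.
Local Unset Implicit Arguments.
Variables (N : nat) (X : TopSpace).

Definition foot (F : 'I_N -> X -> Prop) (I : {set 'I_N}) : X -> Prop :=
  fun x => forall i, i \in I -> F i x.

Definition inIK (F : 'I_N -> X -> Prop) (I : {set 'I_N}) :=
  I != set0 /\ exists x, foot F I x.

Variables (K : AtlasData N X) (D : forall I : {set 'I_N}, aU K I -> Prop) (F : 'I_N -> X -> Prop).

Definition weak_atlas :=
  (forall i, @topen X (F i)) /\ (forall x, exists i, F i x) /\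
  (forall I : {set 'I_N}, inIK F I ->
     is_chart (D I) (apr K I) (azr K I) (asec K I) (apsi K I) (foot F I)) /\
  (* conventions U_II = U_I, phi_II = id *)
  (forall (I : {set 'I_N}) x, aUIJ K I I x <-> D I x) /\ (forall (I : {set 'I_N}) x, aphi K I I x = x) /\
  (forall I J : {set 'I_N}, inIK F I -> inIK F J -> I \proper J ->
     coord_change (D I) (D J) (apr K I) (azr K I) (asec K I) (apsi K I)
       (apr K J) (azr K J) (asec K J) (apsi K J)
       (foot F I) (foot F J) (aUIJ K I J) (aPhi K I J) (aphi K I J)) /\
  (forall I J L : {set 'I_N}, inIK F I -> inIK F J -> inIK F L -> I \proper J -> J \proper L ->
     forall e, aUIJ K I J (apr K I e) -> aUIJ K J L (aphi K I J (apr K I e)) ->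
       aUIJ K I L (apr K I e) -> aPhi K J L (aPhi K I J e) = aPhi K I L e).

Definition topological_atlas :=
  weak_atlas /\
  (forall I J L : {set 'I_N}, inIK F I -> inIK F J -> inIK F L -> I \proper J -> J \proper L ->
     forall x, aUIJ K I J x -> aUIJ K J L (aphi K I J x) -> aUIJ K I L x).

Definition filtered :=
  (forall J : {set 'I_N}, inIK F J -> forall I : {set 'I_N}, I \subset J ->
     rel_closed (fun e => D J (apr K J e)) (aEE K I J)) /\
  (forall J : {set 'I_N}, inIK F J -> forall e, aEE K J J e <-> D J (apr K J e)) /\
  (forall J : {set 'I_N}, inIK F J -> forall e, aEE K set0 J e <-> exists x, D J x /\ azr K J x = e) /\
  (forall I J L : {set 'I_N}, inIK F J -> inIK F L -> I \subset J -> J \proper L ->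
     forall f, img (aPhi K J L) (fun e => aUIJ K J L (apr K J e) /\ aEE K I J e) f <->
       (aEE K I L f /\ exists x, aUIJ K J L x /\ apr K L f = aphi K J L x)) /\
  (forall J : {set 'I_N}, inIK F J -> forall I H : {set 'I_N}, I \subset J -> H \subset J ->
     forall e, (aEE K I J e /\ aEE K H J e) <-> aEE K (I :&: H) J e) /\
  (forall I J : {set 'I_N}, inIK F I -> inIK F J -> I \proper J ->
     rel_open (fun y => D J y /\ aEE K I J (asec K J y)) (img (aphi K I J) (aUIJ K I J))).

(* U_IL with the convention U_IL := ∅ for L ∉ I_K *)
Definition UUe (I L : {set 'I_N}) : aU K I -> Prop :=
  fun x => inIK F L /\ aUIJ K I L x.

Definition tame :=
  (forall I J L : {set 'I_N}, inIK F I -> inIK F J -> inIK F L -> I \subset J -> I \subset L ->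
     forall x, (aUIJ K I J x /\ aUIJ K I L x) <-> UUe I (J :|: L) x) /\
  (forall I J L : {set 'I_N}, inIK F I -> inIK F J -> inIK F L -> I \subset J -> J \subset L ->
     forall y, img (aphi K I J) (aUIJ K I L) y <-> (aUIJ K J L y /\ aEE K I J (asec K J y))).

(* the generating relation of the virtual neighbourhood |K| *)
Definition vstep : relation {I : {set 'I_N} & aU K I} :=
  fun p q => exists I J (x : aU K I), inIK F I /\ inIK F J /\ I \subset J /\
    aUIJ K I J x /\ p = existT _ I x /\ q = existT _ J (aphi K I J x).

Definition vrel := clos_refl_sym_trans _ vstep.

End AtlasDefs.
Arguments foot {N X} F I _.
Arguments inIK {N X} F I.
Arguments weak_atlas {N X} K D F.
Arguments topological_atlas {N X} K D F.
Arguments filtered {N X} K D F.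
Arguments UUe {N X} K F I L _.
Arguments tame {N X} K F.
Arguments vstep {N X} K F _ _.
Arguments vrel {N X} K F _ _.

Local Unset Implicit Arguments.
Definition restrict (N : nat) (X : TopSpace) (K : AtlasData N X)
    (D' : forall I : {set 'I_N}, aU K I -> Prop) : AtlasData N X :=
  {| aU := aU K; aE := aE K; apr := apr K; azr := azr K; asec := asec K;
     apsi := apsi K;
     aUIJ := fun I J x => D' I x /\ aUIJ K I J x /\ D' J (aphi K I J x);
     aPhi := aPhi K; aphi := aphi K;
     aEE := fun I J e => aEE K I J e /\ D' J (apr K J e) |}.
Arguments restrict {N X} K D'.
Set Implicit Arguments.

Definition fullD (N : nat) (X : TopSpace) (K : AtlasData N X) : forall I : {set 'I_N}, aU K I -> Prop :=
  fun _ _ => True.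
Arguments fullD {N X} K _ _.

Definition tame_atlas (N : nat) (X : TopSpace) (K : AtlasData N X) (F : 'I_N -> X -> Prop) :=
  topological_atlas K (fullD K) F /\ filtered K (fullD K) F /\ tame K F.

(* K' = (K restricted to U'_I = D' I, footprints F'_i) is a tame shrinking of K *)
Definition tame_shrinking (N : nat) (X : TopSpace) (K : AtlasData N X)
    (F : 'I_N -> X -> Prop) (D' : forall I : {set 'I_N}, aU K I -> Prop) (F' : 'I_N -> X -> Prop) :=
  (forall i, @topen X (F' i)) /\ (forall i, precompact_in (F' i) (F i)) /\
  (forall x, exists i, F' i x) /\
  (forall I : {set 'I_N}, (exists x, foot F I x) -> exists x, foot F' I x) /\
  (forall I : {set 'I_N}, inIK F I -> rel_open (fun _ => True) (D' I) /\ precompact_in (D' I) (fun _ => True)) /\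
  topological_atlas (restrict K D') D' F' /\
  filtered (restrict K D') D' F' /\
  tame (restrict K D') F'.
Arguments tame_atlas {N X} K F.
Arguments tame_shrinking {N X} K F D' F'.

(* Main.v *)
Require Import Defs.
From Stdlib Require Import Reals Relations List.
From mathcomp Require Import all_boot.
Set Implicit Arguments.

Lemma phi_inj N X (K : AtlasData N X) F (W : weak_atlas K (fullD K) F)
  I J (iI : inIK F I) (iJ : inIK F J) (sIJ : I \subset J) a b :
  aUIJ K I J a -> aUIJ K I J b -> aphi K I J a = aphi K I J b -> a = b.
Proof.
case: W => [_ [_ [_ [HUII [HphiII [Hcc _]]]]]].
case/eqVproper: sIJ => [E|P].
  subst J; by rewrite !HphiII.
move=> Ha Hb Hab.
have [_ [_ [_ [_ [_ [[_ [_ [Hinj _]]] _]]]]]] := Hcc I J iI iJ P.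
exact: Hinj.
Qed.

Lemma compose N X (K : AtlasData N X) F (T : topological_atlas K (fullD K) F)
  I J L (iI : inIK F I) (iJ : inIK F J) (iL : inIK F L)
  (sIJ : I \subset J) (sJL : J \subset L) x :
  aUIJ K I J x -> aUIJ K J L (aphi K I J x) ->
  aUIJ K I L x /\ aphi K I L x = aphi K J L (aphi K I J x).
Proof.
case: T => [[_ [_ [Hch [HUII [HphiII [Hcc Hwc]]]]]] Hcoc].
case/eqVproper: sIJ => [E|PIJ].
  subst J; rewrite HphiII; by [].
case/eqVproper: sJL => [E|PJL].
  subst L; rewrite HphiII; by [].
move=> H1 H2.
have H3 := Hcoc I J L iI iJ iL PIJ PJL x H1 H2.
split => //.
have [_ [_ [_ [_ [_ [_ [_ [_ [_ [przr _]]]]]]]]]] := Hch I iI.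
have [_ [_ [_ [_ [_ [_ [Hpr _]]]]]]] := Hcc I J iI iJ PIJ.
have [_ [_ [_ [_ [_ [_ [Hpr2 _]]]]]]] := Hcc J L iJ iL PJL.
have PIL : I \proper L by apply: (proper_trans PIJ PJL).
have [_ [_ [_ [_ [_ [_ [Hpr3 _]]]]]]] := Hcc I L iI iL PIL.
have ex : apr K I (azr K I x) = x by apply: przr.
rewrite -{1}ex -Hpr3; last by rewrite ex.
rewrite -(Hwc I J L iI iJ iL PIJ PJL (azr K I x)); try by rewrite ex.
rewrite Hpr2; last by rewrite Hpr ex.
by rewrite Hpr ex.
Qed.
Lemma s_in_E N X (K : AtlasData N X) F (W : weak_atlas K (fullD K) F)
  (Fl : filtered K (fullD K) F)
  I M (iI : inIK F I) (iM : inIK F M) (sIM : I \subset M) x :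
  aUIJ K I M x -> aEE K I M (asec K M (aphi K I M x)).
Proof.
case: W => [_ [_ [Hch [HUII [HphiII [Hcc _]]]]]].
case: Fl => [_ [HEJJ [_ [Hii _]]]].
case/eqVproper: sIM => [E|P].
  subst M => _; by apply/HEJJ.
move=> Hx.
have [_ [_ [_ [_ [_ [_ [_ [_ [_ [_ [_ [prs _]]]]]]]]]]]] := Hch I iI.
have [_ [_ [_ [_ [_ [_ [_ [_ [Hs _]]]]]]]]] := Hcc I M iI iM P.
rewrite Hs //.
have := proj1 (Hii I I M iI iM (subxx I) P (aPhi K I M (asec K I x))).
case.
  exists (asec K I x); split => //; split; first by rewrite prs.
  by apply/HEJJ.
by [].
Qed.
Definition RK N X (K : AtlasData N X) (F : 'I_N -> X -> Prop) (p q : {I : {set 'I_N} & aU K I}) : Prop :=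
  let (I, x) := p in let (J, y) := q in
  exists M, inIK F I /\ inIK F J /\ inIK F M /\ I \subset M /\ J \subset M /\
    aUIJ K I M x /\ aUIJ K J M y /\ aphi K I M x = aphi K J M y.

Arguments RK {N X} K F p q.
Lemma RK_trans N X (K : AtlasData N X) F (A : tame_atlas K F) p q r :
  RK K F p q -> RK K F q r -> RK K F p r.
Proof.
case: A => [T [_ [T1 T2]]].
case: p => I x; case: q => J y; case: r => L z /=.
move=> [M1 [iI [iJ [iM1 [sI1 [sJ1 [Ux1 [Uy1 E1]]]]]]]].
move=> [M2 [_ [iL [iM2 [sJ2 [sL2 [Uy2 [Uz2 E2]]]]]]]].
have [iM UyM] := proj1 (T1 J M1 M2 iJ iM1 iM2 sJ1 sJ2 y) (conj Uy1 Uy2).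
set M := M1 :|: M2 in iM UyM *.
have s1 : M1 \subset M by apply: subsetUl.
have s2 : M2 \subset M by apply: subsetUr.
have [U1 _] := proj1 (T2 J M1 M iJ iM1 iM sJ1 s1 _) (ex_intro _ y (conj UyM erefl)).
have [U2 _] := proj1 (T2 J M2 M iJ iM2 iM sJ2 s2 _) (ex_intro _ y (conj UyM erefl)).
have [UxM ExM] := compose T iI iM1 iM sI1 s1 x Ux1 (eq_ind_r _ U1 E1).
have [_ EyM] := compose T iJ iM1 iM sJ1 s1 y Uy1 U1.
have [_ EyM2] := compose T iJ iM2 iM sJ2 s2 y Uy2 U2.
have [UzM EzM] := compose T iL iM2 iM sL2 s2 z Uz2 (eq_ind _ _ U2 _ E2).
have sIM := subset_trans sI1 s1.
have sLM := subset_trans sL2 s2.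
exists M; do 7 (split; first by []).
by rewrite ExM E1 -EyM EyM2 E2 EzM.
Qed.
Lemma zero_pull N X (K : AtlasData N X) D F (W : weak_atlas K D F)
  I M (iI : inIK F I) (iM : inIK F M) (sIM : I \subset M) x :
  aUIJ K I M x -> asec K M (aphi K I M x) = azr K M (aphi K I M x) ->
  asec K I x = azr K I x /\ apsi K M (aphi K I M x) = apsi K I x.
Proof.
case: W => [_ [_ [Hch [HUII [HphiII [Hcc _]]]]]].
case/eqVproper: sIM => [E|P].
  subst M; rewrite HphiII; by [].
move=> Ux Z.
have [Uo [_ [_ [[_ [_ [Hinj _]]] [_ [_ [_ [Hzr [Hs Hpsi]]]]]]]]] := Hcc I M iI iM P.
have Dx : D I x by apply: (proj1 Uo).
have [_ [_ [_ [_ [_ [_ [_ [_ [_ [przr [_ [prs _]]]]]]]]]]]] := Hch I iI.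
have Z' : asec K I x = azr K I x.
  apply: Hinj; rewrite ?prs ?przr //.
  by rewrite -Hs // -Hzr.
split => //.
by have [] := Hpsi x Ux Z'.
Qed.

Lemma zero_push N X (K : AtlasData N X) D F (W : weak_atlas K D F)
  I L (iI : inIK F I) (iL : inIK F L) (sIL : I \subset L) x :
  D I x -> asec K I x = azr K I x -> foot F L (apsi K I x) ->
  aUIJ K I L x /\ D L (aphi K I L x) /\
  asec K L (aphi K I L x) = azr K L (aphi K I L x) /\ apsi K L (aphi K I L x) = apsi K I x.
Proof.
case: W => [_ [_ [Hch [HUII [HphiII [Hcc _]]]]]].
case/eqVproper: sIL => [E|P].
  subst L; rewrite HphiII => Dx Zx _; split => //; by apply/HUII.
move=> Dx Zx FL.
have [Uo [Hz [_ [_ [HphiD [_ [_ [_ [_ Hpsi]]]]]]]]] := Hcc I L iI iL P.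
have [_ [_ [_ [_ [_ [_ [_ [_ [_ [_ [_ [_ [HF _]]]]]]]]]]]]] := Hch I iI.
have FI : foot F I (apsi K I x) := HF x (conj Dx Zx).
have [Ux _] := proj2 (Hz x) (conj Dx (conj Zx (conj FI FL))).
split => //; split; first exact: HphiD.
exact: Hpsi.
Qed.

Lemma psi_inj N X (K : AtlasData N X) D F (W : weak_atlas K D F)
  L (iL : inIK F L) a b :
  D L a -> asec K L a = azr K L a -> D L b -> asec K L b = azr K L b ->
  apsi K L a = apsi K L b -> a = b.
Proof.
case: W => [_ [_ [Hch _]]].
have [_ [_ [_ [_ [_ [_ [_ [_ [_ [_ [_ [_ [_ [_ [Hinj _]]]]]]]]]]]]]]] := Hch L iL.
move=> Da Za Db Zb; apply: Hinj; by split.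
Qed.

Lemma inIK_shr N X (K : AtlasData N X) F D' F' (S : tame_shrinking K F D' F') I :
  inIK F I -> inIK F' I.
Proof.
case: S => [_ [_ [_ [Hf _]]]] [nz ex]; split => //; exact: Hf.
Qed.

Lemma inIK_unshr N X (K : AtlasData N X) F D' F' (S : tame_shrinking K F D' F') I :
  inIK F' I -> inIK F I.
Proof.
case: S => [_ [Hp _]] [nz [p Hp']]; split => //; exists p => i Hi.
exact: (proj1 (Hp i) _ (Hp' i Hi)).
Qed.

Lemma RK_refl N X (K : AtlasData N X) F (W : weak_atlas K (fullD K) F) I x :
  inIK F I -> RK K F (existT _ I x) (existT _ I x).
Proof.
case: W => [_ [_ [_ [HUII _]]]] iI.
exists I; do 5 (split; first by []).
have U : aUIJ K I I x by apply/HUII.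
by [].
Qed.

Lemma RK_sym N X (K : AtlasData N X) F p q : RK K F p q -> RK K F q p.
Proof.
case: p => I x; case: q => J y /= [M [a [b [c [d [e [f [g h]]]]]]]].
by exists M.
Qed.

Lemma vrel_RK N X (K : AtlasData N X) F (A : tame_atlas K F) p q :
  vrel K F p q -> p = q \/ RK K F p q.
Proof.
have W : weak_atlas K (fullD K) F by case: A => [[W _] _].
elim => {p q}.
- move=> p q [I [J [x [iI [iJ [sIJ [Ux [-> ->]]]]]]]]; right.
  case: W => [_ [_ [_ [HUII [HphiII _]]]]].
  exists J; do 6 (split; first by []); split; first by apply/HUII.
  by rewrite HphiII.
- by left.
- move=> p q _ [->|H]; [by left|right; exact: RK_sym].
- move=> p q r _ [->|H1] _ [<-|H2]; [by left|by right|by right|].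
  right; exact: (RK_trans A _ _ _ H1 H2).
Qed.

Lemma vstep_mk N X (K : AtlasData N X) (F : 'I_N -> X -> Prop) I J (x : aU K I) y :
  inIK F I -> inIK F J -> I \subset J -> aUIJ K I J x -> aphi K I J x = y ->
  vrel K F (existT _ I x) (existT _ J y).
Proof.
move=> iI iJ sIJ Ux <-; apply: rst_step.
exists I, J, x; do 4 (split; first by []); by split.
Qed.

Lemma RK_shrink N X (K : AtlasData N X) F D' F'
  (A : tame_atlas K F) (S : tame_shrinking K F D' F') I J x y :
  D' I x -> D' J y -> RK K F (existT _ I x) (existT _ J y) ->
  vrel (restrict K D') F' (existT _ I x) (existT _ J y).
Proof.
move=> DIx DJy.
case: (A) => [T [Fl [T1 T2]]].
have W := proj1 T.
case: (S) => [_ [_ [_ [Hfoot [_ [T' [Fl' [T1' T2']]]]]]]].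
have W' := proj1 T'.
move=> [M [iI [iJ [iM [sIM [sJM [Ux [Uy E]]]]]]]].
have iI' := inIK_shr S iI.
have iJ' := inIK_shr S iJ.
set z := aphi K I M x.
have EI := s_in_E W Fl iI iM sIM x Ux.
have EJ := s_in_E W Fl iJ iM sJM y Uy.
rewrite -E in EJ.
have Fl0 := Fl.
case: Fl0 => [_ [_ [HE0 [_ [Hiii _]]]]].
have EH := proj1 (Hiii M iM I J sIM sJM _) (conj EI EJ).
have Hch := proj1 (proj2 (proj2 W)).
have Hch' := proj1 (proj2 (proj2 W')).
case: (eqVneq (I :&: J) set0) => H0.
- rewrite H0 in EH.
  have [v [_ Ev]] := proj1 (HE0 M iM _) EH.
  have [_ [_ [_ [_ [_ [_ [_ [_ [_ [przr [_ [prs _]]]]]]]]]]]] := Hch M iM.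
  have vz : v = z by rewrite -(przr v Logic.I) Ev prs.
  subst v.
  have Zz : asec K M z = azr K M z by [].
  have [Zx Px] := zero_pull W iI iM sIM x Ux Zz.
  rewrite /z E in Zz.
  have [Zy Py] := zero_pull W iJ iM sJM y Uy Zz.
  have [_ [_ [_ [_ [_ [_ [_ [_ [_ [_ [_ [_ [HFI _]]]]]]]]]]]]] := Hch' I iI'.
  have [_ [_ [_ [_ [_ [_ [_ [_ [_ [_ [_ [_ [HFJ _]]]]]]]]]]]]] := Hch' J iJ'.
  have FIp : foot F' I (apsi K I x) := HFI x (conj DIx Zx).
  have FJp : foot F' J (apsi K J y) := HFJ y (conj DJy Zy).
  have Pxy : apsi K J y = apsi K I x by rewrite -Py -Px /z E.
  rewrite Pxy in FJp.
  set L := I :|: J.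
  have FL : foot F' L (apsi K I x).
    move=> i; rewrite in_setU => /orP [h|h]; [exact: FIp|exact: FJp].
  have iL' : inIK F' L.
    split; last by exists (apsi K I x).
    case: iI => nzI _; apply: contra nzI; rewrite setU_eq0 => /andP [] //.
  have [UxL [DxL [ZxL PxL]]] := zero_push W' iI' iL' (subsetUl I J) x DIx Zx FL.
  rewrite -Pxy in FL.
  have [UyL [DyL [ZyL PyL]]] := zero_push W' iJ' iL' (subsetUr I J) y DJy Zy FL.
  have exy : aphi K I L x = aphi K J L y.
    apply: (psi_inj W' iL') => //.
    by rewrite /= PxL PyL Pxy.
  eapply rst_trans with (y := existT _ L (aphi K I L x)).
    exact: (@vstep_mk _ _ (restrict K D') F' I L x _ iI' iL' (subsetUl I J) UxL erefl).
  rewrite exy; apply: rst_sym.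
  exact: (@vstep_mk _ _ (restrict K D') F' J L y _ iJ' iL' (subsetUr I J) UyL erefl).
- set H := I :&: J in H0 EH *.
  have iH : inIK F H.
    split => //; case: iI => _ [p fp]; exists p => i.
    rewrite in_setI => /andP [hi _]; exact: fp i hi.
  have iH' := inIK_shr S iH.
  have sHI : H \subset I := subsetIl I J.
  have sHJ : H \subset J := subsetIr I J.
  have sHM := subset_trans sHI sIM.
  have HUII := proj1 (proj2 (proj2 (proj2 W))).
  have UMz : aUIJ K M M z by apply/HUII.
  have [w [Uw Ew]] := proj2 (T2 H M M iH iM iM sHM (subxx M) z) (conj UMz EH).
  have IM : I :|: M = M by apply/setUidPr.
  have JM : J :|: M = M by apply/setUidPr.
  have [UwI _] := proj2 (T1 H I M iH iI iM sHI sHM w) (ltac:(rewrite /UUe IM; by split)).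
  have [UwJ _] := proj2 (T1 H J M iH iJ iM sHJ sHM w) (ltac:(rewrite /UUe JM; by split)).
  have [U1 _] := proj1 (T2 H I M iH iI iM sHI sIM _) (ex_intro _ w (conj Uw erefl)).
  have [U2 _] := proj1 (T2 H J M iH iJ iM sHJ sJM _) (ex_intro _ w (conj Uw erefl)).
  have [_ C1] := compose T iH iI iM sHI sIM w UwI U1.
  have [_ C2] := compose T iH iJ iM sHJ sJM w UwJ U2.
  have xe : aphi K H I w = x.
    apply: (phi_inj W iI iM sIM) => //; by rewrite -C1 Ew.
  have ye : aphi K H J w = y.
    apply: (phi_inj W iJ iM sJM) => //; by rewrite -C2 Ew /z E.
  have [_ [_ [_ [_ [_ [_ [_ [_ [_ [_ [_ [prs _]]]]]]]]]]]] := Hch I iI.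
  have EHI := s_in_E W Fl iH iI sHI w UwI.
  rewrite xe in EHI.
  have UII : aUIJ (restrict K D') I I x.
    split => //; split; first by apply/HUII.
    by rewrite (proj1 (proj2 (proj2 (proj2 (proj2 W))))).
  have EHI' : aEE (restrict K D') H I (asec (restrict K D') I x).
    split => //=; by rewrite prs.
  have [w' [[Dw' [Uw' _]] Ew']] := proj2 (T2' H I I iH' iI' iI' sHI (subxx I) x) (conj UII EHI').
  have ww : w' = w.
    apply: (phi_inj W iH iI sHI) => //; by rewrite xe.
  subst w'.
  eapply rst_trans with (y := existT _ H w).
    apply: rst_sym; apply: (@vstep_mk _ _ (restrict K D') F' H I w x) => //.
    by split => //; split => //; rewrite xe.
  apply: (@vstep_mk _ _ (restrict K D') F' H J w y) => //.
  by split => //; split => //; rewrite ye.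
Qed.

Lemma vrel_unshr N X (K : AtlasData N X) F D' F' (S : tame_shrinking K F D' F') p q :
  vrel (restrict K D') F' p q -> vrel K F p q.
Proof.
elim => {p q}.
- move=> p q [I [J [x [iI [iJ [sIJ [[_ [Ux _]] [-> ->]]]]]]]].
  apply: rst_step; exists I, J, x; split; first exact: (inIK_unshr S iI).
  split; first exact: (inIK_unshr S iJ).
  split; first exact: sIJ.
  by split.
- move=> p; exact: rst_refl.
- move=> p q _ H; exact: rst_sym.
- move=> p q r _ H1 _ H2; exact: rst_trans H1 H2.
Qed.

Theorem mainTheorem12 (N : nat) (X : TopSpace) (K : AtlasData N X)
    (F : 'I_N -> X -> Prop) (D' : forall I, aU K I -> Prop) (F' : 'I_N -> X -> Prop) :
  compact_set (fun _ : X => True) ->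
  metrizable_set (fun _ : X => True) ->
  tame_atlas K F ->
  tame_shrinking K F D' F' ->
  forall (I J : {set 'I_N}) (x : aU K I) (y : aU K J),
    inIK F I -> D' I x -> inIK F J -> D' J y ->
    (vrel (restrict K D') F' (existT _ I x) (existT _ J y) <->
     vrel K F (existT _ I x) (existT _ J y)).
Proof.
move=> _ _ A S I J x y iI Dx iJ Dy; split.
  exact: vrel_unshr S _ _.
case/(vrel_RK A) => [E|H].
  rewrite -E; exact: rst_refl.
exact: RK_shrink A S I J x y Dx Dy H.
Qed.
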